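(* Let $N\ge 2$, $\xi>0$, and consider the system of $N$ agents in the plane in which each agent interacts (by attraction and repulsion, isotropically) only with its single closest neighbor, i.e. $\dot x=f(x)$ with $f$ as in the context. Let $x^*\in(\mathbb{R}^2)^N\setminus S$. If for all $i\in\{1,\dots,N\}$ and all $k\in\mathcal{N}_i(x^* )$ it holds that $\|x^*_i-x^*_k\|=\xi$, then $x^*$ is a Filippov equilibrium of this system, i.e. $0\in K f(x^* )$, and moreover $1\le|\mathcal{N}_i(x^* )|\le 6$ for all $i\in\{1,\dots,N\}$.
   Context: Configurations are $x=(x_1,\dots,x_N)\in(\mathbb{R}^2)^N$, where $x_i$ is the position of agent $i$, and $\|\cdot\|$ is the Euclidean norm on $\mathbb{R}^2$. The set of degenerate configurations is $S=\{x: \exists\, i\neq j \text{ with } x_i=x_j\}$, and the set of switching configurations is $D=\{x:\exists\, i,j,k \text{ with } j\ne k,\ j,k\neq i,\ \|x_i-x_j\|=\|x_i-x_k\|\}$. For any configuration $x\notin S$, $\mathcal{N}_i(x)=\arg\min_{j\neq i}\|x_i-x_j\|$ is the (possibly multivalued) set of closest neighbors of agent $i$, and $|\mathcal{N}_i(x)|$ its cardinality. For $x\notin D\cup S$, $\mathcal{N}_i(x)=\{c_i(x)\}$ is a singleton and the vector field $f:(\mathbb{R}^2)^N\setminus(D\cup S)\to(\mathbb{R}^2)^N$ is defined componentwise by $$f_i(x)=\big(x_{c_i(x)}-x_i\big)-\xi^2\,\frac{x_{c_i(x)}-x_i}{\|x_{c_i(x)}-x_i\|^2},\qquad i=1,\dots,N.$$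 For $y\in(\mathbb{R}^2)^N$, $K f(y)=\bigcap_{\delta>0}\bigcap_{\mu(\Lambda)=0}\overline{\mathrm{co}}\{f(B(y,\delta)\setminus\Lambda)\}$, where $B(y,\delta)$ is the open Euclidean ball of radius $\delta$ about $y$, $\overline{\mathrm{co}}$ is the closed convex hull, $\mu$ is Lebesgue measure, and the inner intersection ranges over Lebesgue-null sets $\Lambda$ (points where $f$ is undefined are discarded). A configuration $x^*$ is a Filippov equilibrium if $0\in K f(x^* )$. *)

(* Defs.v *)
From mathcomp Require Import all_boot all_order all_algebra.
From mathcomp Require Import reals.
Set Implicit Arguments. Unset Strict Implicit. Unset Printing Implicit Defensive.
Import Order.TTheory GRing.Theory Num.Theory.
Local Open Scope ring_scope.

Section Defs.
Variable R : realType.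

Definition pt := (R * R)%type.
Definition config (N : nat) := 'I_N -> pt.

Definition pdist (p q : pt) : R :=
  Num.sqrt ((p.1 - q.1) ^+ 2 + (p.2 - q.2) ^+ 2).

Definition cdist N (x y : config N) : R :=
  Num.sqrt (\sum_(i < N) (((x i).1 - (y i).1) ^+ 2 + ((x i).2 - (y i).2) ^+ 2)).

Definition cball N (y : config N) (delta : R) : config N -> Prop :=
  fun z => cdist z y < delta.

Definition degenerate N (x : config N) : Prop :=
  exists i j : 'I_N, i <> j /\ x i = x j.

Definition switching N (x : config N) : Prop :=
  exists i j k : 'I_N, j <> k /\ j <> i /\ k <> i /\
    pdist (x i) (x j) = pdist (x i) (x k).

Definition nbrs N (x : config N) (i : 'I_N) : {set 'I_N} :=
  [set j | (j != i) &&
     [forall k, (k != i) ==> (pdist (x i) (x j) <= pdist (x i) (x k))]].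

(* the vector field f; c_i(x) is taken as the (unique, for x outside D u S)
   element of N_i(x).  Only used on configurations outside D u S. *)
Definition fvec N (xi : R) (x : config N) : config N :=
  fun i =>
    let c := odflt i [pick j in nbrs x i] in
    let v := ((x c).1 - (x i).1, (x c).2 - (x i).2) in
    let n2 := v.1 ^+ 2 + v.2 ^+ 2 in
    (v.1 - xi ^+ 2 * v.1 / n2, v.2 - xi ^+ 2 * v.2 / n2).

(* Lebesgue-null subsets of (R^2)^N = R^(2N): for every eps > 0 they are
   covered by countably many closed boxes [a_n, b_n] of total volume < eps. *)
Definition in_box N (a b : config N) (z : config N) : Prop :=
  forall i, (a i).1 <= (z i).1 <= (b i).1 /\ (a i).2 <= (z i).2 <= (b i).2.

Definition box_vol N (a b : config N) : R :=
  \prod_(i < N) (((b i).1 - (a i).1) * ((b i).2 - (a i).2)).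

Definition null_set N (L : config N -> Prop) : Prop :=
  forall eps : R, 0 < eps ->
    exists (a b : nat -> config N),
      (forall n i, (a n i).1 <= (b n i).1 /\ (a n i).2 <= (b n i).2) /\
      (forall z, L z -> exists n, in_box (a n) (b n) z) /\
      (forall M : nat, \sum_(n < M) box_vol (a n) (b n) < eps).

Definition conv_comb N (n : nat) (w : 'I_n -> R) (p : 'I_n -> config N)
  : config N :=
  fun i => (\sum_(k < n) w k * (p k i).1, \sum_(k < n) w k * (p k i).2).

Definition closed_conv_hull N (A : config N -> Prop) : config N -> Prop :=
  fun y => forall eps : R, 0 < eps ->
    exists (n : nat) (w : 'I_n -> R) (p : 'I_n -> config N),
      (forall k, 0 <= w k) /\ \sum_(k < n) w k = 1 /\
      (forall k, A (p k)) /\ cdist y (conv_comb w p) < eps.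

(* Filippov set-valued map K f (y); points of D u S, where f is undefined,
   are discarded *)
Definition filippov_K N (xi : R) (y : config N) : config N -> Prop :=
  fun v => forall delta : R, 0 < delta ->
    forall L : config N -> Prop, null_set L ->
      closed_conv_hull
        (fun u => exists z, cball y delta z /\ ~ L z /\
                    ~ switching z /\ ~ degenerate z /\ u = fvec xi z) v.

Definition config0 N : config N := fun _ => (0, 0).

Definition filippov_equilibrium N (xi : R) (x : config N) : Prop :=
  filippov_K xi x (@config0 N).

End Defs.

(* Main.v *)
Require Import Defs.
From HB Require Import structures.
From mathcomp Require Import all_boot all_order all_algebra.
From mathcomp Require Import reals.
From mathcomp Require Import all_classical all_reals all_analysis.
From mathcomp Require Import measurable_realfun.
From mathcomp Require Import ring lra zify.
Import Defs.
Set Implicit Arguments. Unset Strict Implicit. Unset Printing Implicit Defensive.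
Import Order.TTheory GRing.Theory Num.Theory.
Local Open Scope classical_set_scope.
Local Open Scope ring_scope.

Section Arith.
Variable R : realType.

Lemma sd_pert1 (a b a' b' U h : R) : `|a - b| <= U -> `|a' - a| <= h -> `|b' - b| <= h ->
  h <= 1 -> `|(a' - b')^+2 - (a - b)^+2| <= 4 * (U + 1) * h.
Proof.
move=> hu ha hb h1.
set u := a - b; set e := (a' - a) - (b' - b).
have -> : (a' - b')^+2 - u^+2 = e * (2 * u + e) by rewrite /e /u; ring.
have he : `|e| <= 2 * h.
  apply: le_trans (ler_normB _ _) _; lra.
have hw : `|2 * u + e| <= 2 * U + 2.
  apply: le_trans (ler_normD _ _) _; rewrite normrM ger0_norm //; lra.
rewrite normrM.
have := ler_pM (normr_ge0 e) (normr_ge0 (2 * u + e)) he hw.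
move=> H; apply: le_trans H _; lra.
Qed.


Lemma fin_small (I : finType) (Q : I -> R -> Prop) :
  (forall t, exists tau, 0 < tau /\ forall s, 0 < s -> s <= tau -> Q t s) ->
  exists tau, 0 < tau /\ forall t s, 0 < s -> s <= tau -> Q t s.
Proof.
move=> H; have [f hf] := boolp.choice H.
exists (\big[Num.min/1]_(t : I) f t); split.
  apply: (big_ind (fun v => 0 < v)) => //.
    by move=> x y hx hy; rewrite lt_min hx hy.
  by move=> t _; exact: (hf t).1.
move=> t s s0 st; have [_ h] := hf t; apply: h => //; apply: le_trans st _.
by rewrite (bigD1 t) //= ge_min lexx.
Qed.

Lemma small_and (P Q : R -> Prop) :
  (exists tau, 0 < tau /\ forall s, 0 < s -> s <= tau -> P s) ->
  (exists tau, 0 < tau /\ forall s, 0 < s -> s <= tau -> Q s) ->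
  exists tau, 0 < tau /\ forall s, 0 < s -> s <= tau -> P s /\ Q s.
Proof.
move=> [t1 [t10 h1]] [t2 [t20 h2]]; exists (Num.min t1 t2); split.
  by rewrite lt_min t10 t20.
move=> s s0 st; move: st; rewrite le_min => /andP [s1 s2].
by split; [exact: h1 | exact: h2].
Qed.

Lemma small_quad (c K : R) : 0 <= c -> 0 < K ->
  exists tau, 0 < tau /\ forall s, 0 < s -> s <= tau -> c * s^+2 < K.
Proof.
move=> c0 K0; exists (Num.min 1 (K / (c + 1))); split.
  by rewrite lt_min ltr01 divr_gt0 // ltr_wpDl.
move=> s s0; rewrite le_min => /andP [s1 sK].
have c1 : 0 < c + 1 by lra.
have : s * (c + 1) <= K by rewrite -ler_pdivlMr.
nra.
Qed.

Lemma quad_small (A B C : R) : C != 0 ->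
  exists tau, 0 < tau /\ forall s, 0 < s -> s <= tau -> A + B * s + C * s^+2 != 0.
Proof.
move=> hC.
have [->|hA] := eqVneq A 0.
  have [->|hB] := eqVneq B 0.
    exists 1; split => // s s0 _.
    by rewrite mul0r !add0r mulf_neq0 // expf_neq0 // gt_eqF.
  exists (`|B| / (`|C| + 1)); split.
    by rewrite divr_gt0 // ?normr_gt0 // ltr_wpDl.
  move=> s s0 sB.
  have c1 : 0 < `|C| + 1 by rewrite ltr_wpDl.
  have h1 : s * (`|C| + 1) <= `|B| by rewrite -ler_pdivlMr.
  have h2 : `|C * s| < `|B|.
    rewrite normrM (gtr0_norm s0); nra.
  rewrite add0r (_ : B * s + C * s^+2 = s * (B + C * s)); last by ring.
  rewrite mulf_neq0 //; first by rewrite gt_eqF.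
  apply/eqP => hBC.
  move: h2; rewrite (_ : C * s = - B); last by lra.
  by rewrite normrN ltxx.
exists (Num.min 1 (`|A| / (`|B| + `|C| + 1))); split.
  by rewrite lt_min ltr01 divr_gt0 ?normr_gt0 // ltr_wpDl // addr_ge0.
move=> s s0; rewrite le_min => /andP [s1 sA].
have c1 : 0 < `|B| + `|C| + 1 by rewrite ltr_wpDl // addr_ge0.
have h1 : s * (`|B| + `|C| + 1) <= `|A| by rewrite -ler_pdivlMr.
have h2 : `|B * s + C * s^+2| < `|A|.
  apply: le_lt_trans (ler_normD _ _) _.
  rewrite !normrM ?normrX !(gtr0_norm s0).
  have hB := normr_ge0 B; have hC' := normr_ge0 C.
  have h3 : `|C| * s^+2 <= `|C| * s.
    by apply: ler_wpM2l => //; rewrite expr2 ler_piMl // ltW.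
  lra.
apply/eqP => hE; move: h2.
rewrite (_ : B * s + C * s^+2 = - A); last by lra.
by rewrite normrN ltxx.
Qed.

Definition sd (p q : pt R) : R := (p.1 - q.1)^+2 + (p.2 - q.2)^+2.

Lemma sd_ge0 p q : 0 <= sd p q.
Proof. by rewrite /sd addr_ge0 // sqr_ge0. Qed.

Lemma sdC p q : sd p q = sd q p.
Proof. by rewrite /sd; ring. Qed.

Lemma pdist_le p q p' q' : (pdist p q <= pdist p' q') = (sd p q <= sd p' q').
Proof. by rewrite /pdist ler_sqrt // sd_ge0. Qed.

Lemma pdist_eq p q p' q' : (pdist p q = pdist p' q') <-> (sd p q = sd p' q').
Proof.
split => [|h]; last by rewrite /pdist -/(sd p q) h.
by move/eqP; rewrite /pdist eqr_sqrt ?sd_ge0 //; move/eqP.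
Qed.

Lemma pdist_val p q (xi : R) : 0 <= xi -> pdist p q = xi -> sd p q = xi^+2.
Proof. by move=> x0 <-; rewrite /pdist sqr_sqrtr // sd_ge0. Qed.


Lemma sector_dot (s u1 u2 w1 w2 a1 a2 b1 b2 r2 : R) : s^+2 = 3 -> 0 < s ->
  u1^+2 + u2^+2 = 1 -> u1 - s * u2 = w1 -> s * u1 + u2 = w2 ->
  0 <= u1 * a2 - u2 * a1 -> 0 < a1 * w2 - a2 * w1 ->
  0 <= u1 * b2 - u2 * b1 -> 0 < b1 * w2 - b2 * w1 ->
  a1^+2 + a2^+2 = r2 -> b1^+2 + b2^+2 = r2 -> 0 < r2 ->
  r2 < 2 * (a1 * b1 + a2 * b2).
Proof.
move=> s3 s0 hu hw1 hw2 qa wa qb wb ha hb r0.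
rewrite -hw1 -hw2 in wa wb.
set p := a1 * u1 + a2 * u2; set q := u1 * a2 - u2 * a1.
set p' := b1 * u1 + b2 * u2; set q' := u1 * b2 - u2 * b1.
have qa' : 0 <= q := qa.
have qb' : 0 <= q' := qb.
have wa' : q < s * p by move: wa; rewrite /p /q; lra.
have wb' : q' < s * p' by move: wb; rewrite /p' /q'; lra.
have pa : 0 < p.
  have : 0 < s * p by lra.
  by rewrite pmulr_rgt0.
have pb : 0 < p'.
  have : 0 < s * p' by lra.
  by rewrite pmulr_rgt0.
have hdot : a1 * b1 + a2 * b2 = p * p' + q * q'.
  rewrite -[LHS]mulr1 -hu /p /p' /q /q'; ring.
have hlag : (p * p' + q * q')^+2 + (p' * q - q' * p)^+2 = r2^+2.
  have -> : r2^+2 = (a1^+2 + a2^+2) * (b1^+2 + b2^+2) by rewrite ha hb expr2.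
  have e1 : p^+2 + q^+2 = a1^+2 + a2^+2 by rewrite -[RHS]mulr1 -hu /p /q; ring.
  have e2 : p'^+2 + q'^+2 = b1^+2 + b2^+2 by rewrite -[RHS]mulr1 -hu /p' /q'; ring.
  rewrite -e1 -e2; ring.
have dpos : 0 < p * p' + q * q'.
  have := mulr_gt0 pa pb; have := mulr_ge0 qa' qb'; lra.
have hC : (p' * q - q' * p)^+2 < s^+2 * (p * p' + q * q')^+2.
  have h1 : q * p' < s * p * p' by rewrite ltr_pM2r.
  have h2 : q' * p < s * p' * p by rewrite ltr_pM2r.
  have h3 : 0 <= s * q * q' by rewrite mulr_ge0 // mulr_ge0 // ltW.
  have h5 : 0 <= q' * p by rewrite mulr_ge0 // ltW.
  have h6 : 0 <= q * p' by rewrite mulr_ge0 // ltW.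
  have h4 : `|p' * q - q' * p| < s * (p * p' + q * q').
    rewrite ltr_norml; apply/andP; split; lra.
  have := ltr_pM (normr_ge0 _) (normr_ge0 _) h4 h4.
  rewrite -normrM -expr2 ger0_norm ?sqr_ge0 // => H.
  by apply: lt_le_trans H _; rewrite -expr2 exprMn.
rewrite hdot; rewrite s3 in hC.
have H2 : r2^+2 < 4 * (p * p' + q * q')^+2 by rewrite -hlag; lra.
have H3 : 0 < r2 + 2 * (p * p' + q * q') by lra.
nra.
Qed.


Definition sc (s : R) (k : nat) (v : pt R) : bool :=
  let A := s * v.1 in let b := v.2 in
  match k with
  | O => (0 <= b) && (b < A)
  | S O => (A <= b) && (0 < A + b)
  | S (S O) => (b + A <= 0) && (0 < b)
  | S (S (S O)) => (b <= 0) && (A < b)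
  | S (S (S (S O))) => (b <= A) && (A + b < 0)
  | _ => (0 <= b + A) && (b < 0)
  end.

Lemma sc_ex s (v : pt R) : 0 < s -> v <> (0, 0) -> exists k : 'I_6, sc s k v.
Proof.
move=> s0 hv; set A := s * v.1; set b := v.2.
have hA : b = 0 -> A <> 0.
  move=> b0 A0; apply: hv.
  have v2 : v.2 = 0 := b0.
  have v1 : v.1 = 0 by move: A0; rewrite /A => /eqP; rewrite mulf_eq0 gt_eqF //= => /eqP.
  by rewrite [v]surjective_pairing v1 v2.
have [b0|b0|b0] := ltgtP b 0.
- have [h|h] := ltP A b.
    by exists (inord 3); rewrite inordK //= -/A -/b; apply/andP; split; lra.
  have [h'|h'] := ltP (A + b) 0.
    by exists (inord 4); rewrite inordK //= -/A -/b; apply/andP; split; lra.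
  by exists (inord 5); rewrite inordK //= -/A -/b; apply/andP; split; lra.
- have [h|h] := ltP b A.
    by exists (inord 0); rewrite inordK //= -/A -/b; apply/andP; split; lra.
  have [h'|h'] := ltP 0 (A + b).
    by exists (inord 1); rewrite inordK //= -/A -/b; apply/andP; split; lra.
  by exists (inord 2); rewrite inordK //= -/A -/b; apply/andP; split; lra.
- have hA' := hA b0.
  have [h|h] := ltP 0 A.
    by exists (inord 0); rewrite inordK //= -/A -/b; apply/andP; split; lra.
  have h2 : A < 0 by rewrite lt_neqAle h andbT; apply/eqP.
  by exists (inord 3); rewrite inordK //= -/A -/b; apply/andP; split; lra.
Qed.

Definition sec s (v : pt R) : 'I_6 := odflt ord0 [pick k : 'I_6 | sc s k v].

Lemma sec_ok s v : 0 < s -> v <> (0, 0) -> sc s (sec s v) v.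
Proof.
move=> s0 hv; rewrite /sec; case: pickP => [k //|H].
by have [k hk] := sc_ex s0 hv; move: (H k); rewrite hk.
Qed.

Lemma sector_same s (k : 'I_6) (a b : pt R) r2 : s^+2 = 3 -> 0 < s ->
  sc s k a -> sc s k b -> a.1^+2 + a.2^+2 = r2 -> b.1^+2 + b.2^+2 = r2 -> 0 < r2 ->
  r2 < 2 * (a.1 * b.1 + a.2 * b.2).
Proof.
move=> s3 s0; case: a => a1 a2; case: b => b1 b2 /=.
case: k => [[|[|[|[|[|[|k]]]]]] hk] //= /andP [h1 h2] /andP [h3 h4] ha hb r0.
- apply: (@sector_dot s 1 0 1 s) => //; lra.
- apply: (@sector_dot s (1/2) (s/2) (-1) s) => //; lra.
- apply: (@sector_dot s (-1/2) (s/2) (-2) 0) => //; lra.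
- apply: (@sector_dot s (-1) 0 (-1) (-s)) => //; lra.
- apply: (@sector_dot s (-1/2) (-s/2) 1 (-s)) => //; lra.
- apply: (@sector_dot s (1/2) (-s/2) 2 0) => //; lra.
Qed.

End Arith.

Section Meas.
Variable R : realType.

Definition vol d (a b : 'I_d -> R) : R := \prod_(i < d) (b i - a i).
Definition inb d (a b z : 'I_d -> R) := forall i, a i <= z i <= b i.
Definition tl d (v : 'I_d.+1 -> R) : 'I_d -> R := fun j => v (lift ord0 j).
Definition cns d (t : R) (w : 'I_d -> R) : 'I_d.+1 -> R :=
  fun k => if unlift ord0 k is Some j then w j else t.

Lemma vol_ge0 d (a b : 'I_d -> R) : (forall i, a i <= b i) -> 0 <= vol a b.
Proof. by move=> h; apply: prodr_ge0 => i _; rewrite subr_ge0. Qed.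

Lemma volS d (a b : 'I_d.+1 -> R) : vol a b = (b ord0 - a ord0) * vol (tl a) (tl b).
Proof. by rewrite /vol big_ord_recl. Qed.

Lemma muI (x y : R) : x <= y -> lebesgue_measure ([set` `[x, y]] : set R) = (y - x)%:E.
Proof.
move=> xy; rewrite lebesgue_measure_itv /= lte_fin.
by case: ltgtP xy => // -> _; rewrite subrr.
Qed.

Lemma cover_vol d : forall (a b : nat -> 'I_d -> R) (c : nat -> bool) (al be : 'I_d -> R),
  (forall n i, a n i <= b n i) -> (forall i, al i <= be i) ->
  (forall z, inb al be z -> exists n, c n /\ inb (a n) (b n) z) ->
  ((vol al be)%:E <= \sum_(n <oo) ((c n)%:R * vol (a n) (b n))%:E)%E.
Proof.
elim: d => [|d IH] a b c al be hab hal hcov.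
  have [n [cn _]] : exists n, c n /\ inb (a n) (b n) al.
    by apply: hcov => -[].
  have H := @nneseries_lim_ge R (fun k => ((c k)%:R * vol (a k) (b k))%:E) xpredT 0 n.+1.
  apply: le_trans (H _); last first.
    by move=> k _ _; rewrite lee_fin mulr_ge0 // vol_ge0.
  rewrite big_nat_recr //= cn /vol !big_ord0 mul1r.
  rewrite leeDr // sume_ge0 // => k _; rewrite lee_fin mulr_ge0 //.
  by rewrite big_ord0.
set D : set R := [set` `[al ord0, be ord0]].
have mD : measurable D by exact: measurable_itv.
set V := vol (tl al) (tl be).
pose k n := (c n)%:R * vol (tl (a n)) (tl (b n)).
pose I n : set R := [set` `[a n ord0, b n ord0]].
pose h n t := ((k n)%:E * (\1_(I n) t : R)%:E)%E.
have k0 n : 0 <= k n by rewrite mulr_ge0 // vol_ge0 // => i; exact: hab.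
have h0 n t : (0 <= h n t)%E.
  by rewrite /h /= -EFinM lee_fin mulr_ge0 // indicE.
have mh n : measurable_fun D (fun t => h n t).
  rewrite /h; apply/measurable_EFinP.
  apply: measurable_funM; first exact: measurable_cst.
  by apply: measurable_indic; exact: measurable_itv.
have key t : D t -> (V%:E <= \sum_(n <oo) h n t)%E.
  move=> Dt.
  have := IH (fun n => tl (a n)) (fun n => tl (b n))
    (fun n => c n && (t \in I n)) (tl al) (tl be).
  move=> /(_ _ _ _) H; apply: le_trans (H _ _ _) _.
  - by move=> n i; exact: hab.
  - by move=> i; exact: hal.
  - move=> w hw.
    have hz : inb al be (cns t w).
      move=> i; case: (unliftP ord0 i) => [j ->|->].
        by rewrite /cns liftK; exact: hw.
      rewrite /cns unlift_none.
      by move: Dt; rewrite /D /= in_itv.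
    have [n [cn hn]] := hcov _ hz.
    exists n; split.
      rewrite cn /=; apply/mem_set; rewrite /I /= in_itv /=.
      by have := hn ord0; rewrite /cns unlift_none.
    by move=> j; have := hn (lift ord0 j); rewrite /cns /tl liftK.
  - rewrite le_eqVlt; apply/orP; left; apply/eqP; apply: eq_eseriesr => n _.
    rewrite /h /k -EFinM indicE; congr (_%:E).
    by case: (c n); case: (t \in I n); rewrite /= ?mul1r ?mul0r ?mulr1 ?mulr0.
rewrite volS.
have -> : (((be ord0 - al ord0) * V)%:E = \int[lebesgue_measure]_(t in D) (cst V%:E) t)%E.
  rewrite integral_cst //.
  rewrite [X in (_ * X)%E](_ : _ = (be ord0 - al ord0)%:E); last exact: muI (hal ord0).
  by rewrite -EFinM mulrC.
apply: (@le_trans _ _ (\int[lebesgue_measure]_(t in D) (\sum_(n <oo) h n t))%E).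
  apply: ge0_le_integral => //.
  - by move=> t _; rewrite lee_fin vol_ge0 // => i; exact: hal.
  - exact: (ge0_emeasurable_sum (D := D) (h := h) (P := xpredT) (fun k x _ _ => h0 k x) (fun k _ => mh k)).
rewrite (integral_nneseries lebesgue_measure mD (f := h)) //.
apply: lee_nneseries => [n _ _|n _]; first exact: integral_ge0.
have mI : measurable (I n) by exact: measurable_itv.
have hf0 : forall t, D t -> (0 <= (\1_(I n) t : R)%:E)%E.
  by move=> t Dt; rewrite lee_fin indicE.
have mf : measurable_fun D (fun t => (\1_(I n) t : R)%:E).
  apply/measurable_EFinP; apply: measurable_indic; exact: measurable_itv.
have E := ge0_integralZl_EFin lebesgue_measure mD hf0 mf (k0 n).
apply: (@le_trans _ _ ((k n)%:E * \int[lebesgue_measure]_(x in D) (\1_(I n) x : R)%:E)%E).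
  by rewrite -E; exact: lexx.
rewrite integral_indic //.
have -> : (c n)%:R * vol (a n) (b n) = k n * (b n ord0 - a n ord0).
  by rewrite volS mulrCA mulrC.
rewrite [X in (_ <= X)%E]EFinM.
apply: (@le_trans _ _ ((k n)%:E * lebesgue_measure (I n `&` D))%E); first exact: lexx.
apply: lee_pmul; rewrite ?lee_fin ?lexx //.
rewrite (_ : ((b n ord0 - a n ord0)%:E) = lebesgue_measure (I n)); last by rewrite muI.
apply: le_measure; rewrite ?inE //.
- by apply: measurableI.
Qed.

End Meas.

Section Transfer.
Variable R : realType.
Variable N : nat.

Definition emb (v : config R N) : 'I_(N + N) -> R :=
  fun k => match fintype.split k with inl i => (v i).1 | inr i => (v i).2 end.
Definition unemb (w : 'I_(N + N) -> R) : config R N :=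
  fun i => (w (lshift N i), w (rshift N i)).

Lemma emb_l v i : emb v (lshift N i) = (v i).1.
Proof. by rewrite /emb -[lshift N i]/(unsplit (inl _ i)) unsplitK. Qed.
Lemma emb_r v i : emb v (rshift N i) = (v i).2.
Proof. by rewrite /emb -[rshift N i]/(unsplit (inr _ i)) unsplitK. Qed.

Lemma emb_cases (P : 'I_(N + N) -> Prop) :
  (forall i, P (lshift N i)) -> (forall i, P (rshift N i)) -> forall k, P k.
Proof.
move=> hl hr k; rewrite -(splitK k); case: (fintype.split k) => j /=; [exact: hl|exact: hr].
Qed.

Lemma vol_emb (a b : config R N) : vol (emb a) (emb b) = box_vol a b.
Proof.
rewrite /vol /box_vol big_split_ord /= big_split /=.
by congr (_ * _); apply: eq_bigr => i _; rewrite ?emb_l ?emb_r.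
Qed.

Lemma box_not_null (L : config R N -> Prop) (lo hi : config R N) :
  (forall i, (lo i).1 < (hi i).1 /\ (lo i).2 < (hi i).2) -> null_set L ->
  exists z, in_box lo hi z /\ ~ L z.
Proof.
move=> hlh hL.
have [//|H] := boolp.pselect (exists z, in_box lo hi z /\ ~ L z).
have cov : forall z, in_box lo hi z -> L z.
  by move=> z hz; apply: boolp.contrapT => nL; apply: H; exists z; split.
have V0 : 0 < box_vol lo hi.
  apply: prodr_gt0 => i _; have [h1 h2] := hlh i.
  by apply: mulr_gt0; rewrite subr_gt0.
have [a [b [hab [hcov hsum]]]] := hL _ (divr_gt0 V0 (ltr0n _ 2)).
have := @cover_vol R (N + N) (fun n => emb (a n)) (fun n => emb (b n)) (fun _ => true)
   (emb lo) (emb hi).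
move=> /(_ _ _ _) C.
have {C} C : ((box_vol lo hi)%:E <= \sum_(n <oo) ((box_vol (a n) (b n)))%:E)%E.
  rewrite -vol_emb; apply: le_trans (C _ _ _) _.
  - move=> n; apply: emb_cases => i; rewrite ?emb_l ?emb_r; by have [] := hab n i.
  - apply: emb_cases => i; rewrite ?emb_l ?emb_r; have [h1 h2] := hlh i; exact: ltW.
  - move=> w hw.
    have hz2 : in_box lo hi (unemb w).
      move=> i; rewrite /unemb /=.
      have := hw (lshift N i); have := hw (rshift N i).
      by rewrite ?emb_l ?emb_r => -> ->.
    have [n hn] := hcov _ (cov _ hz2).
    exists n; split => //.
    apply: emb_cases => i; rewrite ?emb_l ?emb_r; by have [] := hn i.
  - rewrite le_eqVlt; apply/orP; left; apply/eqP; apply: eq_eseriesr => n _.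
    by rewrite mul1r vol_emb.
have : (\sum_(n <oo) ((box_vol (a n) (b n)))%:E <= (box_vol lo hi / 2)%:E)%E.
  apply: lime_le.
    apply: is_cvg_nneseries => n _ _; rewrite lee_fin.
    apply: prodr_ge0 => i _; have [h1 h2] := hab n i.
    by apply: mulr_ge0; rewrite subr_ge0.
  apply: nearW => M; rewrite sumEFin lee_fin.
  by rewrite big_mkord ltW // hsum.
move=> H2; have := le_trans C H2; rewrite lee_fin; lra.
Qed.

End Transfer.

Section Geo.
Variable R : realType.

Lemma nbrs_nonempty N (z : config R N) (i : 'I_N) : (2 <= N)%N ->
  exists k, k \in nbrs z i.
Proof.
move=> hN.
have [k0 hk0] : exists k0 : 'I_N, k0 != i.
  have h0 : (0 < N)%N by apply: leq_trans hN.
  have h1 : (1 < N)%N by [].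
  have [e|ne] := eqVneq i (Ordinal h0).
    by exists (Ordinal h1); rewrite e; apply/eqP => -[].
  by exists (Ordinal h0); rewrite eq_sym.
case: (@arg_minP _ R _ k0 (fun k => k != i) (fun k => pdist (z i) (z k)) hk0) => k hk hmin.
exists k; rewrite inE hk /=; apply/forallP => k'; apply/implyP => hk'.
exact: hmin.
Qed.

Lemma coord_bound N (v : config R N) : exists U, 0 <= U /\
  forall i k, `|(v i).1 - (v k).1| <= U /\ `|(v i).2 - (v k).2| <= U.
Proof.
set T := \sum_(i < N) (`|(v i).1| + `|(v i).2|).
have hT : forall i, `|(v i).1| + `|(v i).2| <= T.
  move=> i; rewrite /T (bigD1 i) //= lerDl sumr_ge0 // => j _.
exists (2 * T); split.
  by rewrite mulr_ge0 // sumr_ge0 // => j _; apply: addr_ge0.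
move=> i k; have hi := hT i; have hk := hT k.
have := normr_ge0 (v i).1; have := normr_ge0 (v i).2.
have := normr_ge0 (v k).1; have := normr_ge0 (v k).2.
by split; apply: le_trans (ler_normB _ _) _; lra.
Qed.

Lemma sd_pert (p q p' q' : pt R) U h : `|p.1 - q.1| <= U -> `|p.2 - q.2| <= U ->
  `|p'.1 - p.1| <= h -> `|p'.2 - p.2| <= h -> `|q'.1 - q.1| <= h -> `|q'.2 - q.2| <= h ->
  h <= 1 -> `|sd p' q' - sd p q| <= 8 * (U + 1) * h.
Proof.
move=> h1 h2 h3 h4 h5 h6 h7.
have e1 := sd_pert1 h1 h3 h5 h7.
have e2 := sd_pert1 h2 h4 h6 h7.
rewrite /sd (_ : _ - _ = ((p'.1 - q'.1)^+2 - (p.1 - q.1)^+2) + ((p'.2 - q'.2)^+2 - (p.2 - q.2)^+2));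
  last by ring.
apply: le_trans (ler_normD _ _) _; lra.
Qed.

Lemma small_lin (c K : R) : 0 <= c -> 0 < K ->
  exists tau, 0 < tau /\ forall s, 0 < s -> s <= tau -> c * s < K.
Proof.
move=> c0 K0; exists (K / (c + 1)); split.
  by rewrite divr_gt0 // ltr_wpDl.
move=> s s0 sK.
have c1 : 0 < c + 1 by lra.
have : s * (c + 1) <= K by rewrite -ler_pdivlMr.
nra.
Qed.

Lemma pow2_nat (i j k : nat) : j != k -> j != i -> k != i -> (2 ^ j + 2 ^ k != 2 ^ i.+1)%N.
Proof.
move=> jk ji ki; rewrite expnS.
have p1 : forall m, (0 < 2 ^ m)%N by move=> m; rewrite expn_gt0.
have [hj|hj|hj] := ltngtP j i; last by rewrite hj eqxx in ji.
- have [hk|hk|hk] := ltngtP k i; last by rewrite hk eqxx in ki.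
  + have a1 : (2 ^ j < 2 ^ i)%N by rewrite ltn_exp2l.
    have a2 : (2 ^ k < 2 ^ i)%N by rewrite ltn_exp2l.
    lia.
  + have a2 : (2 ^ i.+1 <= 2 ^ k)%N by rewrite leq_exp2l.
    have := p1 j; rewrite expnS in a2; lia.
- have a2 : (2 ^ i.+1 <= 2 ^ j)%N by rewrite leq_exp2l.
  have := p1 k; rewrite expnS in a2; lia.
Qed.

Lemma pow2_gap (i j k : nat) : j != k -> j != i -> k != i ->
  ((2 ^ i)%:R - (2 ^ j)%:R)^+2 - ((2 ^ i)%:R - (2 ^ k)%:R)^+2 != 0 :> R.
Proof.
move=> jk ji ki; rewrite subr_eq0 eqf_sqr; apply/norP; split.
  apply/eqP => H.
  have : ((2 ^ j)%:R : R) = (2 ^ k)%:R by lra.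
  by move/eqP; rewrite eqr_nat eqn_exp2l // (negbTE jk).
apply/eqP => H.
have : (((2 ^ j + 2 ^ k)%N)%:R : R) = (2 ^ i.+1)%:R.
  rewrite natrD expnS natrM; lra.
by move/eqP; rewrite eqr_nat (negbTE (pow2_nat jk ji ki)).
Qed.


Lemma fvec_sq N (xi : R) (z : config R N) i :
  sd (z i) (z (odflt i [pick j in nbrs z i])) != 0 ->
  (fvec xi z i).1^+2 + (fvec xi z i).2^+2 =
  (sd (z i) (z (odflt i [pick j in nbrs z i])) - xi^+2)^+2 /
     sd (z i) (z (odflt i [pick j in nbrs z i])).
Proof.
rewrite /fvec /=; set c := odflt i _ => hn.
have e : ((z c).1 - (z i).1)^+2 + ((z c).2 - (z i).2)^+2 = sd (z i) (z c).
  by rewrite /sd; ring.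
rewrite e.
set v1 := (z c).1 - (z i).1; set v2 := (z c).2 - (z i).2.
have E2 : forall m : R, (v1 - xi^+2 * v1 / m)^+2 + (v2 - xi^+2 * v2 / m)^+2 =
   (v1^+2 + v2^+2) * (1 - xi^+2 / m)^+2 by move=> m; ring.
rewrite E2 e; field; exact: hn.
Qed.

Lemma xfacts N (x : config R N) (xi : R) : (2 <= N)%N -> 0 < xi ->
  (forall i k, k \in nbrs x i -> pdist (x i) (x k) = xi) ->
  [/\ (forall i k, k \in nbrs x i -> sd (x i) (x k) = xi^+2),
      (forall i k, k != i -> xi^+2 <= sd (x i) (x k)) &
      (forall i, exists k, k != i /\ sd (x i) (x k) = xi^+2)].
Proof.
move=> hN hxi H.
have H1 : forall i k, k \in nbrs x i -> sd (x i) (x k) = xi^+2.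
  by move=> i k hk; apply: pdist_val (ltW hxi) (H i k hk).
split => //.
- move=> i k ki; have [m hm] := nbrs_nonempty x i hN.
  have := hm; rewrite inE => /andP [mi /forallP hall].
  by have := implyP (hall k) ki; rewrite pdist_le (H1 i m hm).
- move=> i; have [m hm] := nbrs_nonempty x i hN.
  exists m; split; last exact: H1.
  by move: hm; rewrite inE => /andP [].
Qed.

Lemma count6 N (x : config R N) (xi : R) (i : 'I_N) : 0 < xi ->
  (forall i k, k \in nbrs x i -> sd (x i) (x k) = xi^+2) ->
  (forall i k, k != i -> xi^+2 <= sd (x i) (x k)) -> (#|nbrs x i| <= 6)%N.
Proof.
move=> hxi Hn F1.
pose s := Num.sqrt (3 : R).
have s0 : 0 < s by rewrite sqrtr_gt0.
have s3 : s^+2 = 3 by rewrite sqr_sqrtr.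
have x2 : 0 < xi^+2 by rewrite exprn_gt0.
pose f k := sec s ((x k).1 - (x i).1, (x k).2 - (x i).2).
have inj : {in nbrs x i &, injective f}.
  move=> j k hj hk hf; apply/eqP; apply: contraT => jk.
  pose a := ((x j).1 - (x i).1, (x j).2 - (x i).2).
  pose b := ((x k).1 - (x i).1, (x k).2 - (x i).2).
  have ha : a.1^+2 + a.2^+2 = xi^+2 by rewrite -(Hn i j hj) /sd /=; ring.
  have hb : b.1^+2 + b.2^+2 = xi^+2 by rewrite -(Hn i k hk) /sd /=; ring.
  have a0 : a <> (0, 0).
    by move=> e; move: ha; rewrite e /= => h; lra.
  have b0 : b <> (0, 0).
    by move=> e; move: hb; rewrite e /= => h; lra.
  have hsa := sec_ok s0 a0; have hsb := sec_ok s0 b0.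
  have e : sec s a = sec s b := hf.
  rewrite e in hsa.
  have := sector_same s3 s0 hsa hsb ha hb x2.
  have kj : k != j by rewrite eq_sym.
  have := F1 j k kj.
  have E : sd (x j) (x k) = (a.1^+2 + a.2^+2) + (b.1^+2 + b.2^+2) - 2 * (a.1 * b.1 + a.2 * b.2).
    by rewrite /sd /=; ring.
  rewrite E ha hb; lra.
rewrite -(card_in_imset inj); apply: leq_trans (max_card _) _.
by rewrite card_ord.
Qed.

End Geo.

Section P1.
Variable R : realType.

Lemma sq_le (a t : R) : `|a| <= t -> a^+2 <= t^+2.
Proof. by rewrite ler_norml => /andP [h1 h2]; nra. Qed.

Lemma dist_le (a b t : R) : `|a - b| <= t -> b - t <= a /\ a <= b + t.
Proof. by rewrite ler_distl => /andP [h1 h2]. Qed.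

Lemma part1 N (x : config R N) (xi : R) : (2 <= N)%N -> 0 < xi ->
  (forall i k, k != i -> xi^+2 <= sd (x i) (x k)) ->
  (forall i, exists k, k != i /\ sd (x i) (x k) = xi^+2) ->
  filippov_equilibrium xi x.
Proof.
move=> hN hxi F1 F2 delta hdelta L hL eps heps.
have [U [U0 hU]] := coord_bound x.
pose E := 8 * (U + 1).
have E0 : 0 < E by rewrite /E; lra.
have x2 : 0 < xi^+2 by rewrite exprn_gt0.
have h0 : exists tau : R, 0 < tau /\ forall s, 0 < s -> s <= tau -> s <= 1.
  by exists 1; split.
have [th [th0 [th1 thE th3 th4]]] : exists th, 0 < th /\ [/\ th <= 1, E * th <= xi^+2 / 2,
      N%:R * 2 * E^+2 * th^+2 < eps^+2 * xi^+2 & N%:R * 2 * th^+2 < delta^+2].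
  have hK1 : 0 < xi^+2 / 2 by rewrite divr_gt0.
  have hc2 : 0 <= N%:R * 2 * E^+2.
    by apply: mulr_ge0; [apply: mulr_ge0 | apply: exprn_ge0; exact: ltW].
  have hK2 : 0 < eps^+2 * xi^+2 by apply: mulr_gt0 => //; exact: exprn_gt0.
  have hc3 : 0 <= N%:R * 2 :> R by apply: mulr_ge0.
  have hK3 : 0 < delta^+2 by rewrite exprn_gt0.
  have [tau [tau0 htau]] := small_and h0 (small_and (small_lin (ltW E0) hK1)
     (small_and (small_quad hc2 hK2) (small_quad hc3 hK3))).
  exists tau; split => //; have [a [b [c d]]] := htau tau tau0 (lexx _).
  by split => //; exact: ltW.

pose cc (i : 'I_N) : R := (2 ^ i)%:R.
pose valid (t : 'I_N * 'I_N * 'I_N) := [&& t.1.2 != t.2, t.1.2 != t.1.1 & t.2 != t.1.1].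
pose z0s (s : R) : config R N := fun i => ((x i).1 + s * cc i, (x i).2).
pose Qv (s : R) (t : 'I_N * 'I_N * 'I_N) :=
  sd (z0s s t.1.1) (z0s s t.1.2) - sd (z0s s t.1.1) (z0s s t.2).
have hQ : forall t, exists tau, 0 < tau /\ forall s, 0 < s -> s <= tau -> valid t -> Qv s t != 0.
  move=> [[i j] k]; rewrite /valid /=.
  have [/and3P [jk ji ki]|nv] := boolP [&& j != k, j != i & k != i]; last first.
    by exists 1; split => // s _ _ hv; rewrite hv in nv.
  pose A := sd (x i) (x j) - sd (x i) (x k).
  pose B := 2 * ((x i).1 - (x j).1) * (cc i - cc j) - 2 * ((x i).1 - (x k).1) * (cc i - cc k).
  pose C := (cc i - cc j)^+2 - (cc i - cc k)^+2.
  have hC : C != 0 by exact: pow2_gap.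
  have [tau [tau0 htau]] := quad_small A B hC.
  exists tau; split => // s s0 st _.
  have -> : Qv s ((i, j), k) = A + B * s + C * s^+2.
    by rewrite /Qv /z0s /A /B /C /sd /=; ring.
  exact: htau.
have [s [s0 [hs1 hs2]]] : exists s, 0 < s /\ (forall t, valid t -> Qv s t != 0) /\
    2 * (2 ^ N)%:R * s < th.
  have hc : 0 <= 2 * (2 ^ N)%:R :> R by apply: mulr_ge0.
  have hF : exists tau, 0 < tau /\ forall s, 0 < s -> s <= tau ->
      forall t, valid t -> Qv s t != 0.
    have [tau [t0 h]] := fin_small hQ.
    by exists tau; split => // s' a b t; exact: h.
  have [tau [tau0 htau]] := small_and hF (small_lin hc th0).
  exists tau; split => //; have [a b] := htau tau tau0 (lexx _).
  by split.

pose z0 := z0s s.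
have [U1 [U10 hU1]] := coord_bound z0.
have hR : forall t, exists tau, 0 < tau /\ forall r, 0 < r -> r <= tau -> valid t ->
    16 * (U1 + 1) * r < `|Qv s t|.
  move=> t; have [hv|nv] := boolP (valid t); last first.
    by exists 1; split => // r _ _ hv; rewrite hv in nv.
  have hc : 0 <= 16 * (U1 + 1) :> R by apply: mulr_ge0 => //; lra.
  have hK : 0 < `|Qv s t| by rewrite normr_gt0; exact: hs1.
  have [tau [tau0 htau]] := small_lin hc hK.
  by exists tau; split => // r r0 rt _; exact: htau.
have [r [r0 [r1 [hr2 hr3]]]] : exists r, 0 < r /\ r <= 1 /\ 2 * r < th /\
    (forall t, valid t -> 16 * (U1 + 1) * r < `|Qv s t|).
  have hF : exists tau, 0 < tau /\ forall r, 0 < r -> r <= tau ->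
      forall t, valid t -> 16 * (U1 + 1) * r < `|Qv s t|.
    have [tau [t0 h]] := fin_small hR.
    by exists tau; split => // s' a b t; exact: h.
  have [tau [tau0 htau]] := small_and h0 (small_and (small_lin (ler0n _ 2) th0) hF).
  by exists tau; split => //; have [a [b c]] := htau tau tau0 (lexx _).
pose lo : config R N := fun i => ((z0 i).1 - r, (z0 i).2 - r).
pose hi : config R N := fun i => ((z0 i).1 + r, (z0 i).2 + r).
have hlh : forall i, (lo i).1 < (hi i).1 /\ (lo i).2 < (hi i).2.
  by move=> i; rewrite /lo /hi /=; split; lra.
have [z [hz nLz]] := box_not_null hlh hL.
have hzz : forall i, `|(z i).1 - (z0 i).1| <= r /\ `|(z i).2 - (z0 i).2| <= r.
  move=> i; have [/andP [a1 a2] /andP [b1 b2]] := hz i.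
  by move: a1 a2 b1 b2; rewrite /lo /hi /= => a1 a2 b1 b2; rewrite !ler_distl; split; apply/andP; split; lra.
have hcc : forall i, 0 <= s * cc i <= s * (2 ^ N)%:R.
  move=> i; apply/andP; split; first by apply: mulr_ge0 => //; exact: ltW.
  by rewrite ler_pM2l // ler_nat leq_exp2l // ltnW.
have hzx : forall i, `|(z i).1 - (x i).1| <= th /\ `|(z i).2 - (x i).2| <= th.
  move=> i; have [a b] := hzz i; have /andP [c1 c2] := hcc i.
  move: a b; rewrite /z0 /z0s /= !ler_distl => /andP [a1 a2] /andP [b1 b2].
  by split; apply/andP; split; lra.
have hZ2 : forall i k, `|sd (z i) (z k) - sd (x i) (x k)| <= E * th.
  move=> i k; have [u1 u2] := hU i k; have [a1 a2] := hzx i; have [b1 b2] := hzx k.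
  exact: sd_pert.

have hZ3 : forall i j k, j != k -> j != i -> k != i -> sd (z i) (z j) != sd (z i) (z k).
  move=> i j k jk ji ki; apply/eqP => e.
  have hv : valid ((i, j), k) by rewrite /valid /= jk ji ki.
  have := hr3 _ hv.
  have [u1 u2] := hU1 i j; have [v1 v2] := hU1 i k.
  have [a1 a2] := hzz i; have [b1 b2] := hzz j; have [c1 c2] := hzz k.
  have d1 := sd_pert u1 u2 a1 a2 b1 b2 r1.
  have d2 := sd_pert v1 v2 a1 a2 c1 c2 r1.
  have -> : Qv s ((i, j), k) = (sd (z i) (z k) - sd (z0 i) (z0 k)) - (sd (z i) (z j) - sd (z0 i) (z0 j)).
    by rewrite /Qv /= e; ring.
  move=> H; have := lt_le_trans H (ler_normB _ _); lra.
have hZ4 : forall i k, k != i -> xi^+2 / 2 <= sd (z i) (z k).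
  move=> i k ki; have := F1 i k ki; have [h1 h2] := dist_le (hZ2 i k); lra.
have nsw : ~ switching z.
  move=> [i [j [k [jk [ji [ki /pdist_eq e]]]]]].
  by move/eqP: e; apply/negP; apply: hZ3; apply/eqP.
have ndg : ~ degenerate z.
  move=> [i [j [ij e]]].
  have ji : j != i by apply/eqP => h; apply: ij.
  have := hZ4 i j ji; rewrite e /sd !subrr expr0n /= addr0; lra.
have sqlt : forall S t : R, 0 <= S -> 0 < t -> S < t^+2 -> Num.sqrt S < t.
  move=> S t S0 t0 St.
  by rewrite -(ger0_norm (ltW t0)) -sqrtr_sqr ltr_sqrt // exprn_gt0.
have hball : cball x delta z.
  rewrite /cball /cdist; apply: sqlt => //.
    by apply: sumr_ge0 => i _; apply: addr_ge0; exact: sqr_ge0.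
  apply: le_lt_trans th4.
  have hb : forall i : 'I_N, ((z i).1 - (x i).1)^+2 + ((z i).2 - (x i).2)^+2 <= th^+2 + th^+2.
    by move=> i; have [a b] := hzx i; apply: lerD; apply: sq_le.
  apply: le_trans (ler_sum _ (fun i _ => hb i)) _.
  by rewrite sumr_const card_ord -mulr_natl; lra.

pose D := 2 * (E * th)^+2 / xi^+2.
have D0 : 0 <= D.
  rewrite /D; apply: divr_ge0; last exact: ltW.
  by apply: mulr_ge0 => //; exact: sqr_ge0.
have hDx : D * (xi^+2 / 2) = (E * th)^+2 by rewrite /D; field; rewrite gt_eqF.
have hterm : forall i, (fvec xi z i).1^+2 + (fvec xi z i).2^+2 <= D.
  move=> i.
  have [k hk] := nbrs_nonempty z i hN.
  set c := odflt i [pick j in nbrs z i].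
  have hc : c \in nbrs z i.
    rewrite /c; case: pickP => [j hj //|H].
    by have := H k; rewrite hk.
  move: hc; rewrite inE => /andP [ci /forallP hall].
  have [k0 [k0i hk0]] := F2 i.
  have up1 : sd (z i) (z c) <= sd (z i) (z k0).
    by have := implyP (hall k0) k0i; rewrite pdist_le.
  have [lo1 _] := dist_le (hZ2 i c).
  have [_ up2] := dist_le (hZ2 i k0).
  have lo2 := F1 i c ci.
  have n0 : 0 < sd (z i) (z c) by lra.
  rewrite fvec_sq ?gt_eqF // -/c.
  rewrite ler_pdivrMr //.
  have h1 : (sd (z i) (z c) - xi^+2)^+2 <= (E * th)^+2.
    by apply: sq_le; rewrite ler_distl; apply/andP; split; lra.
  have h2 : D * (xi^+2 / 2) <= D * sd (z i) (z c).
    by apply: ler_wpM2l => //; lra.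
  lra.
have hconv : conv_comb (fun _ : 'I_1 => 1) (fun _ => fvec xi z) = fvec xi z.
  apply: boolp.funext => i; rewrite /conv_comb !big_ord1 !mul1r.
  by case: (fvec xi z i).
exists 1%N, (fun _ => 1), (fun _ => fvec xi z); split => //.
split; first by rewrite big_ord1.
split; first by move=> _; exists z.
rewrite hconv /cdist; apply: sqlt => //.
  by apply: sumr_ge0 => i _; apply: addr_ge0; exact: sqr_ge0.
apply: le_lt_trans (_ : \sum_(i < N) D < _).
  apply: ler_sum => i _; rewrite /config0 /= !sub0r !sqrrN; exact: hterm.
rewrite sumr_const card_ord -mulr_natl.
have -> : N%:R * D = (N%:R * 2 * E^+2 * th^+2) / xi^+2 by rewrite /D; field; rewrite gt_eqF.
by rewrite ltr_pdivrMr.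
Qed.

End P1.

Theorem mainTheorem2 (R : realType) (N : nat) (xi : R) (x : config R N) :
  (2 <= N)%N -> 0 < xi -> ~ degenerate x ->
  (forall i k : 'I_N, k \in nbrs x i -> pdist (x i) (x k) = xi) ->
  filippov_equilibrium xi x /\
  (forall i : 'I_N, (1 <= #|nbrs x i| <= 6)%N).
Proof.
move=> hN hxi nd H.
have [H1 F1 F2] := xfacts hN hxi H.
split; first exact: part1 hN hxi F1 F2.
move=> i; apply/andP; split.
  have [k hk] := nbrs_nonempty x i hN.
  by apply/card_gt0P; exists k.
exact: count6 hxi H1 F1.
Qed.
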